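(* Let $d\sigma^2$ be an admissible positive semi-definite metric on a $2$-manifold $M^2$ and let $p$ be an intrinsic cross cap of $d\sigma^2$. Then $p$ is an isolated singular point of $d\sigma^2$, and the null space $\mathcal{N}_p$ is one-dimensional.
   Context: For a smooth positive semi-definite metric $d\sigma^2$ with $\langle\cdot,\cdot\rangle=d\sigma^2$: singular points are where it is not positive definite; $\mathcal{N}_p=\{v\in T_pM^2: d\sigma^2(v,w)=0\ \forall w\}$; the Kossowski pseudo-connection is $\Gamma(X,Y,Z)=\tfrac12\bigl(X\langle Y,Z\rangle+Y\langle X,Z\rangle-Z\langle X,Y\rangle+\langle[X,Y],Z\rangle-\langle[X,Z],Y\rangle-\langle[Y,Z],X\rangle\bigr)$; admissible: at each singular point $p$, $\Gamma(V_1,V_2,V_3)(p)=0$ whenever $V_3(p)\in\mathcal{N}_p$. A singular point $p$ of an admissible metric is an intrinsic cross cap if, in a local coordinate system $(u,v)$ centered at $p$ with $d\sigma^2=E\,du^2+2F\,du\,dv+G\,dv^2$ and $\delta:=EG-F^2$, the Hessian determinant $\delta_{uu}\delta_{vv}-\delta_{uv}^2$ does not vanish at $p$ (this is independent of the coordinates). *)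

(* Defs.v *)
From Stdlib Require Import Reals.
From Coquelicot Require Import Coquelicot.
Open Scope R_scope.

(* Local model: an open set U of the (u,v)-coordinate plane; functions are R -> R -> R. *)
Definition fun2 := R -> R -> R.

Definition open2 (U : R -> R -> Prop) : Prop :=
  forall u v, U u v -> exists eps, 0 < eps /\
    forall x y, Rabs (x - u) < eps -> Rabs (y - v) < eps -> U x y.

Definition du (f : fun2) : fun2 := fun u v => Derive (fun x => f x v) u.
Definition dv (f : fun2) : fun2 := fun u v => Derive (fun y => f u y) v.

Fixpoint Ck (k : nat) (U : R -> R -> Prop) (f : fun2) : Prop :=
  match k with
  | O => forall u v, U u v -> continuity_2d_pt f u v
  | S k' => (forall u v, U u v -> continuity_2d_pt f u v /\
                 ex_derive (fun x => f x v) u /\ ex_derive (fun y => f u y) v)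
            /\ Ck k' U (du f) /\ Ck k' U (dv f)
  end.

Definition smooth (U : R -> R -> Prop) (f : fun2) : Prop := forall k, Ck k U f.

(* A metric dsigma^2 = E du^2 + 2 F du dv + G dv^2 *)
Record metric := Metric { mE : fun2; mF : fun2; mG : fun2 }.

Definition bform (g : metric) (u v a1 b1 a2 b2 : R) : R :=
  mE g u v * a1 * a2 + mF g u v * (a1 * b2 + b1 * a2) + mG g u v * b1 * b2.

Definition smooth_metric (U : R -> R -> Prop) (g : metric) : Prop :=
  smooth U (mE g) /\ smooth U (mF g) /\ smooth U (mG g).

Definition psd_metric (U : R -> R -> Prop) (g : metric) : Prop :=
  forall u v, U u v -> forall a b, 0 <= bform g u v a b a b.

Definition singular (U : R -> R -> Prop) (g : metric) (u v : R) : Prop :=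
  U u v /\ ~ (forall a b, (a, b) <> (0, 0) -> 0 < bform g u v a b a b).

Definition nullspace (g : metric) (u v a b : R) : Prop :=
  forall c d, bform g u v a b c d = 0.

(* vector fields X = X1 d/du + X2 d/dv *)
Record vfield := VF { vf1 : fun2; vf2 : fun2 }.

Definition smooth_vf (U : R -> R -> Prop) (X : vfield) : Prop :=
  smooth U (vf1 X) /\ smooth U (vf2 X).

Definition vact (X : vfield) (f : fun2) : fun2 :=
  fun u v => vf1 X u v * du f u v + vf2 X u v * dv f u v.

Definition lie (X Y : vfield) : vfield :=
  VF (fun u v => vact X (vf1 Y) u v - vact Y (vf1 X) u v)
     (fun u v => vact X (vf2 Y) u v - vact Y (vf2 X) u v).

Definition gpair (g : metric) (X Y : vfield) : fun2 :=
  fun u v => bform g u v (vf1 X u v) (vf2 X u v) (vf1 Y u v) (vf2 Y u v).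

Definition kossowski (g : metric) (X Y Z : vfield) : fun2 :=
  fun u v => / 2 * ( vact X (gpair g Y Z) u v + vact Y (gpair g X Z) u v
                     - vact Z (gpair g X Y) u v
                     + gpair g (lie X Y) Z u v - gpair g (lie X Z) Y u v
                     - gpair g (lie Y Z) X u v).

Definition admissible (U : R -> R -> Prop) (g : metric) : Prop :=
  forall u v, singular U g u v ->
  forall V1 V2 V3 : vfield, smooth_vf U V1 -> smooth_vf U V2 -> smooth_vf U V3 ->
    nullspace g u v (vf1 V3 u v) (vf2 V3 u v) ->
    kossowski g V1 V2 V3 u v = 0.

Definition delta (g : metric) : fun2 :=
  fun u v => mE g u v * mG g u v - mF g u v ^ 2.

Definition intrinsic_cross_cap (U : R -> R -> Prop) (g : metric) : Prop :=
  singular U g 0 0 /\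
  du (du (delta g)) 0 0 * dv (dv (delta g)) 0 0 - du (dv (delta g)) 0 0 ^ 2 <> 0.

Definition isolated_singular (U : R -> R -> Prop) (g : metric) : Prop :=
  exists r, 0 < r /\ forall u v, (u, v) <> (0, 0) -> u ^ 2 + v ^ 2 < r ^ 2 ->
    ~ singular U g u v.

Definition nullspace_dim1 (g : metric) (u v : R) : Prop :=
  exists a0 b0, (a0, b0) <> (0, 0) /\
    forall a b, nullspace g u v a b <-> exists t, a = t * a0 /\ b = t * b0.

(* Main.v *)
Require Import Defs.
From Stdlib Require Import Reals Lra Psatz.
From Coquelicot Require Import Coquelicot.
Open Scope R_scope.

Lemma open_locally1 U u v : open2 U -> U u v -> locally u (fun t => U t v).
Proof.
  intros HU Huv. destruct (HU u v Huv) as [e [He H]].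
  exists (mkposreal e He). intros t Ht. apply H.
  - exact Ht.
  - rewrite Rminus_diag, Rabs_R0; exact He.
Qed.

Lemma open_locally2 U u v : open2 U -> U u v -> locally v (fun t => U u t).
Proof.
  intros HU Huv. destruct (HU u v Huv) as [e [He H]].
  exists (mkposreal e He). intros t Ht. apply H.
  - rewrite Rminus_diag, Rabs_R0; exact He.
  - exact Ht.
Qed.

Lemma open_locally2d U u v : open2 U -> U u v -> locally_2d U u v.
Proof.
  intros HU Huv. destruct (HU u v Huv) as [e [He H]].
  exists (mkposreal e He). intros x y Hx Hy. apply H; assumption.
Qed.

Lemma Ck_ext k U f g : open2 U -> (forall u v, U u v -> f u v = g u v) ->
  Ck k U f -> Ck k U g.
Proof.
  intros HU. revert f g. induction k as [|k IH]; intros f g Hfg Hf; simpl in *.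
  - intros u v Huv. apply continuity_2d_pt_ext_loc with f; [|now apply Hf].
    destruct (open_locally2d U u v HU Huv) as [e He]. exists e; intros; now apply Hfg, He.
  - destruct Hf as [H0 [H1 H2]]. split; [|split].
    + intros u v Huv. destruct (H0 u v Huv) as [C [D1 D2]]. split; [|split].
      * apply continuity_2d_pt_ext_loc with f; [|exact C].
        destruct (open_locally2d U u v HU Huv) as [e He]. exists e; intros; now apply Hfg, He.
      * apply ex_derive_ext_loc with (fun x => f x v); [|exact D1].
        destruct (open_locally1 U u v HU Huv) as [e He]. exists e; intros; now apply Hfg, He.
      * apply ex_derive_ext_loc with (fun x => f u x); [|exact D2].
        destruct (open_locally2 U u v HU Huv) as [e He]. exists e; intros; now apply Hfg, He.
    + apply IH with (du f); [|exact H1]. intros u v Huv. unfold du. apply Derive_ext_loc.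
      destruct (open_locally1 U u v HU Huv) as [e He]. exists e; intros; now apply Hfg, He.
    + apply IH with (dv f); [|exact H2]. intros u v Huv. unfold dv. apply Derive_ext_loc.
      destruct (open_locally2 U u v HU Huv) as [e He]. exists e; intros; now apply Hfg, He.
Qed.

Lemma Ck_S k U f : Ck (S k) U f -> Ck k U f.
Proof.
  revert f. induction k as [|k IH]; intros f Hf.
  - simpl in *. intros u v Huv. now apply Hf.
  - destruct Hf as [H0 [H1 H2]]. split; [exact H0|]. split; now apply IH.
Qed.

Lemma Ck_plus k U f g : open2 U -> Ck k U f -> Ck k U g ->
  Ck k U (fun u v => f u v + g u v).
Proof.
  intros HU. revert f g. induction k as [|k IH]; intros f g Hf Hg.
  - simpl in *. intros u v Huv. apply continuity_2d_pt_plus; auto.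
  - destruct Hf as [F0 [F1 F2]]. destruct Hg as [G0 [G1 G2]]. split; [|split].
    + intros u v Huv. destruct (F0 u v Huv) as [C [D1 D2]]. destruct (G0 u v Huv) as [C' [D1' D2']].
      split; [|split].
      * apply continuity_2d_pt_plus; auto.
      * apply (ex_derive_plus (fun x => f x v) (fun x => g x v)); auto.
      * apply (ex_derive_plus (fun x => f u x) (fun x => g u x)); auto.
    + apply Ck_ext with (fun u v => du f u v + du g u v); auto.
      intros u v Huv. destruct (F0 u v Huv) as [C [D1 D2]]. destruct (G0 u v Huv) as [C' [D1' D2']].
      unfold du. rewrite (Derive_plus (fun x => f x v) (fun x => g x v)); auto.
    + apply Ck_ext with (fun u v => dv f u v + dv g u v); auto.
      intros u v Huv. destruct (F0 u v Huv) as [C [D1 D2]]. destruct (G0 u v Huv) as [C' [D1' D2']].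
      unfold dv. rewrite (Derive_plus (fun x => f u x) (fun x => g u x)); auto.
Qed.

Lemma Ck_opp k U f : open2 U -> Ck k U f -> Ck k U (fun u v => - f u v).
Proof.
  intros HU. revert f. induction k as [|k IH]; intros f Hf.
  - simpl in *. intros u v Huv. apply continuity_2d_pt_opp; auto.
  - destruct Hf as [F0 [F1 F2]]. split; [|split].
    + intros u v Huv. destruct (F0 u v Huv) as [C [D1 D2]].
      split; [|split].
      * apply continuity_2d_pt_opp; auto.
      * apply (ex_derive_opp (fun x => f x v)); auto.
      * apply (ex_derive_opp (fun x => f u x)); auto.
    + apply Ck_ext with (fun u v => - du f u v); auto.
      intros u v Huv. unfold du. rewrite (Derive_opp (fun x => f x v)); auto.
    + apply Ck_ext with (fun u v => - dv f u v); auto.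
      intros u v Huv. unfold dv. rewrite (Derive_opp (fun x => f u x)); auto.
Qed.

Lemma Ck_mult k U f g : open2 U -> Ck k U f -> Ck k U g ->
  Ck k U (fun u v => f u v * g u v).
Proof.
  intros HU. revert f g. induction k as [|k IH]; intros f g Hf Hg.
  - simpl in *. intros u v Huv. apply continuity_2d_pt_mult; auto.
  - pose proof Hf as Hf'. pose proof Hg as Hg'.
    destruct Hf as [F0 [F1 F2]]. destruct Hg as [G0 [G1 G2]]. split; [|split].
    + intros u v Huv. destruct (F0 u v Huv) as [C [D1 D2]]. destruct (G0 u v Huv) as [C' [D1' D2']].
      split; [|split].
      * apply continuity_2d_pt_mult; auto.
      * apply (ex_derive_mult (fun x => f x v) (fun x => g x v)); auto.
      * apply (ex_derive_mult (fun x => f u x) (fun x => g u x)); auto.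
    + apply Ck_ext with (fun u v => du f u v * g u v + f u v * du g u v); auto.
      * intros u v Huv. destruct (F0 u v Huv) as [C [D1 D2]]. destruct (G0 u v Huv) as [C' [D1' D2']].
        unfold du. rewrite (Derive_mult (fun x => f x v) (fun x => g x v)); auto.
      * apply Ck_plus; auto. apply IH; auto. now apply Ck_S.
        apply IH; auto. now apply Ck_S.
    + apply Ck_ext with (fun u v => dv f u v * g u v + f u v * dv g u v); auto.
      * intros u v Huv. destruct (F0 u v Huv) as [C [D1 D2]]. destruct (G0 u v Huv) as [C' [D1' D2']].
        unfold dv. rewrite (Derive_mult (fun x => f u x) (fun x => g u x)); auto.
      * apply Ck_plus; auto. apply IH; auto. now apply Ck_S.
        apply IH; auto. now apply Ck_S.
Qed.

Lemma Ck_exdiff n U f : Ck n U f -> forall u v, U u v -> ex_diff_n f n u v.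
Proof.
  revert f. induction n as [|n IH]; intros f Hf u v Huv; simpl in *.
  - split; auto.
  - destruct Hf as [H0 [H1 H2]]. destruct (H0 u v Huv) as [C [D1 D2]].
    repeat split; auto. all: try apply (IH (du f)); try apply (IH (dv f)); auto.
Qed.

Lemma delta_Ck n U g : open2 U -> smooth_metric U g -> Ck n U (delta g).
Proof.
  intros HU [HE [HF HG]]. unfold delta.
  apply Ck_ext with (fun u v => mE g u v * mG g u v + - (mF g u v * mF g u v)); auto.
  - intros; ring.
  - apply Ck_plus; auto. apply Ck_mult; auto. apply Ck_opp; auto. apply Ck_mult; auto.
Qed.
Lemma DL2 f x y : DL_pol 2 f 0 0 x y = f 0 0 + du f 0 0 * x + dv f 0 0 * y
  + (du (du f) 0 0 * x^2 + 2 * du (dv f) 0 0 * x * y + dv (dv f) 0 0 * y ^2) / 2.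
Proof.
  unfold DL_pol, differential. simpl sum_f_R0.
  change (du (du f) 0 0) with (partial_derive 2 0 f 0 0).
  change (du (dv f) 0 0) with (partial_derive 1 1 f 0 0).
  change (dv (dv f) 0 0) with (partial_derive 0 2 f 0 0).
  change (partial_derive 0 0 f 0 0) with (f 0 0).
  change (du f 0 0) with (partial_derive 1 0 f 0 0).
  change (dv f 0 0) with (partial_derive 0 1 f 0 0).
  unfold Binomial.C. simpl. field.
Qed.

Lemma Rabs_le_inv x y : Rabs x <= y -> - y <= x <= y.
Proof. intros H. pose proof (Rle_abs x). pose proof (Rle_abs (-x)). rewrite Rabs_Ropp in *. lra. Qed.

Lemma oneD (a q D r : R) : 0 < r ->
  (forall t, 0 < t < r -> 0 <= a * t + q * t^2 + D * t^3 /\ 0 <= - a * t + q * t^2 + D * t^3) ->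
  a = 0 /\ 0 <= q.
Proof.
  intros Hr H.
  set (K := Rabs q + Rabs D + 1).
  assert (HK : 0 < K) by (unfold K; pose proof (Rabs_pos q); pose proof (Rabs_pos D); lra).
  assert (Hgen : forall t, 0 < t < r -> t <= 1 -> Rabs a * t <= K * t^2).
  { intros t Ht Ht1. destruct (H t Ht) as [H1 H2].
    assert (q * t^2 <= Rabs q * t^2) by (apply Rmult_le_compat_r; [apply pow_le; lra| apply Rle_abs]).
    assert (D * t^3 <= Rabs D * t^2).
    { apply Rle_trans with (Rabs D * t^3). apply Rmult_le_compat_r; [apply pow_le; lra|apply Rle_abs].
      apply Rmult_le_compat_l; [apply Rabs_pos|]. destruct Ht as [Ht0 Ht1']. simpl.
      assert (0 <= t * t) by nra. nra. }
    assert (0 <= t^2) by (apply pow_le; lra).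
    unfold K. destruct (Rle_dec 0 a).
    - rewrite Rabs_pos_eq by lra. lra.
    - rewrite Rabs_left by lra. lra. }
  assert (Ha : a = 0).
  { destruct (Req_dec a 0) as [|Hne]; auto. exfalso.
    assert (Hpa : 0 < Rabs a) by (apply Rabs_pos_lt; auto).
    set (t := Rmin (r/2) (Rmin 1 (Rabs a / (2 * K)))).
    assert (t1 : t <= r/2) by apply Rmin_l.
    assert (t2 : t <= 1) by (eapply Rle_trans; [apply Rmin_r|apply Rmin_l]).
    assert (t3 : t <= Rabs a / (2*K)) by (eapply Rle_trans; [apply Rmin_r|apply Rmin_r]).
    assert (t0 : 0 < t).
    { unfold t. apply Rmin_pos. lra. apply Rmin_pos. lra. apply Rdiv_lt_0_compat; lra. }
    specialize (Hgen t ltac:(lra) t2).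
    assert (K * t <= Rabs a / 2).
    { apply Rle_trans with (K * (Rabs a / (2*K))). apply Rmult_le_compat_l; lra.
      right. field. lra. }
    nra. }
  split; auto. subst a.
  destruct (Rle_dec 0 q) as [|Hq]; auto. exfalso.
  set (K' := Rabs D + 1).
  set (t := Rmin (r/2) (Rmin 1 (- q / (2 * K')))).
  assert (HK' : 0 < K') by (unfold K'; pose proof (Rabs_pos D); lra).
  assert (t1 : t <= r/2) by apply Rmin_l.
  assert (t2 : t <= 1) by (eapply Rle_trans; [apply Rmin_r|apply Rmin_l]).
  assert (t3 : t <= - q / (2*K')) by (eapply Rle_trans; [apply Rmin_r|apply Rmin_r]).
  assert (t0 : 0 < t).
  { unfold t. apply Rmin_pos. lra. apply Rmin_pos. lra. apply Rdiv_lt_0_compat; lra. }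
  destruct (H t ltac:(lra)) as [H1 _].
  assert (K' * t <= - q / 2).
  { apply Rle_trans with (K' * (- q / (2*K'))). apply Rmult_le_compat_l; lra.
    right. field. lra. }
  assert (D * t^3 <= Rabs D * t^3) by (apply Rmult_le_compat_r; [apply pow_le; lra|apply Rle_abs]).
  assert (Ht2 : 0 < t^2) by (apply pow_lt; lra).
  assert (0 <= t^2 * (q + Rabs D * t)) by (replace (t^2 * (q + Rabs D * t)) with (q * t^2 + Rabs D * t^3) by ring; lra).
  assert (0 <= q + Rabs D * t).
  { apply Rmult_le_reg_l with (t^2); auto. lra. }
  unfold K' in *. lra.
Qed.

Lemma core (phi : R -> R -> R) a b A B C D r : 0 < r ->
  (forall x y, Rabs x < r -> Rabs y < r -> 0 <= phi x y /\
     Rabs (phi x y - (a * x + b * y + (A * x^2 + 2 * B * x * y + C * y^2) / 2))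
       <= D * Rmax (Rabs x) (Rabs y) ^ 3) ->
  a = 0 /\ b = 0 /\ forall u0 v0, 0 <= A * u0^2 + 2 * B * u0 * v0 + C * v0^2.
Proof.
  intros Hr H.
  assert (Ha : a = 0 /\ 0 <= A / 2).
  { apply (oneD a (A/2) D r Hr). intros t Ht.
    assert (Hm : forall s, Rabs s = t -> Rmax (Rabs s) (Rabs 0) = t).
    { intros s Hs. rewrite Rabs_R0, Hs. apply Rmax_left. lra. }
    destruct (H t 0) as [P1 Q1]. rewrite Rabs_pos_eq; lra. rewrite Rabs_R0; lra.
    destruct (H (-t) 0) as [P2 Q2]. rewrite Rabs_Ropp, Rabs_pos_eq; lra. rewrite Rabs_R0; lra.
    rewrite Hm in Q1 by (apply Rabs_pos_eq; lra).
    rewrite Hm in Q2 by (rewrite Rabs_Ropp; apply Rabs_pos_eq; lra).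
    apply Rabs_le_inv in Q1. apply Rabs_le_inv in Q2. split; nra. }
  assert (Hb : b = 0 /\ 0 <= C / 2).
  { apply (oneD b (C/2) D r Hr). intros t Ht.
    assert (Hm : forall s, Rabs s = t -> Rmax (Rabs 0) (Rabs s) = t).
    { intros s Hs. rewrite Rabs_R0, Hs. apply Rmax_right. lra. }
    destruct (H 0 t) as [P1 Q1]. rewrite Rabs_R0; lra. rewrite Rabs_pos_eq; lra.
    destruct (H 0 (-t)) as [P2 Q2]. rewrite Rabs_R0; lra. rewrite Rabs_Ropp, Rabs_pos_eq; lra.
    rewrite Hm in Q1 by (apply Rabs_pos_eq; lra).
    rewrite Hm in Q2 by (rewrite Rabs_Ropp; apply Rabs_pos_eq; lra).
    apply Rabs_le_inv in Q1. apply Rabs_le_inv in Q2. split; nra. }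
  destruct Ha as [Ha _]. destruct Hb as [Hb _]. subst a b.
  split; [reflexivity|split;[reflexivity|]].
  intros u0 v0.
  set (N := Rabs u0 + Rabs v0 + 1).
  assert (HN : 0 < N) by (unfold N; pose proof (Rabs_pos u0); pose proof (Rabs_pos v0); lra).
  set (q0 := (A * u0^2 + 2 * B * u0 * v0 + C * v0^2) / 2).
  enough (0 <= q0) by (unfold q0 in *; lra).
  apply (oneD 0 q0 (Rabs D * N^3) (r / N)). apply Rdiv_lt_0_compat; lra.
  intros t [Ht0 Htr].
  assert (tN : t * N < r).
  { apply Rmult_lt_compat_r with (r:=N) in Htr; auto. unfold Rdiv in Htr.
    rewrite Rmult_assoc, Rinv_l, Rmult_1_r in Htr by lra. lra. }
  assert (Hu : Rabs (t * u0) <= t * N).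
  { rewrite Rabs_mult, Rabs_pos_eq by lra. apply Rmult_le_compat_l; try lra.
    unfold N; pose proof (Rabs_pos v0); lra. }
  assert (Hv : Rabs (t * v0) <= t * N).
  { rewrite Rabs_mult, Rabs_pos_eq by lra. apply Rmult_le_compat_l; try lra.
    unfold N; pose proof (Rabs_pos u0); lra. }
  destruct (H (t * u0) (t * v0)) as [P Q]; try lra.
  set (m := Rmax (Rabs (t * u0)) (Rabs (t * v0))) in Q.
  assert (m0 : 0 <= m) by (unfold m; eapply Rle_trans; [apply Rabs_pos|apply Rmax_l]).
  assert (mN : m <= t * N) by (unfold m; apply Rmax_lub; auto).
  assert (m3 : m^3 <= (t*N)^3) by (apply pow_incr; lra).
  assert (D * m^3 <= Rabs D * (t*N)^3).
  { apply Rle_trans with (Rabs D * m^3). apply Rmult_le_compat_r; [apply pow_le; lra|apply Rle_abs].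
    apply Rmult_le_compat_l; auto. apply Rabs_pos. }
  apply Rabs_le_inv in Q.
  assert (E : (A * (t * u0) ^ 2 + 2 * B * (t * u0) * (t * v0) + C * (t * v0) ^ 2) / 2 = q0 * t^2)
    by (unfold q0; field).
  rewrite E in Q.
  assert (0 <= q0 * t^2 + Rabs D * N^3 * t^3) by (replace (Rabs D * N^3 * t^3) with (Rabs D * (t*N)^3) by ring; lra).
  split; lra.
Qed.

Lemma d2_prod (e gg f : R -> R) :
  locally 0 (fun x => ex_derive e x /\ ex_derive gg x /\ ex_derive f x) ->
  ex_derive (Derive e) 0 -> ex_derive (Derive gg) 0 -> ex_derive (Derive f) 0 ->
  Derive (fun x => Derive (fun y => e y * gg y - f y ^ 2) x) 0 =
  Derive (Derive e) 0 * gg 0 + 2 * Derive e 0 * Derive gg 0 + e 0 * Derive (Derive gg) 0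
  - 2 * (Derive f 0)^2 - 2 * f 0 * Derive (Derive f) 0.
Proof.
  intros Hl He Hg Hf.
  destruct (locally_singleton _ _ Hl) as [He0 [Hg0 Hf0]].
  rewrite (Derive_ext_loc _ (fun x => Derive e x * gg x + e x * Derive gg x - 2 * (f x * Derive f x))).
  2: { apply filter_imp with (2 := Hl). intros x [H1 [H2 H3]].
       rewrite (Derive_ext (fun y => e y * gg y - f y ^ 2) (fun y => e y * gg y - f y * f y)) by (intros; ring).
       rewrite Derive_minus.
       2: apply ex_derive_mult; auto.
       2: apply ex_derive_mult; auto.
       rewrite !Derive_mult by auto. ring. }
  rewrite Derive_minus.
  2: apply (ex_derive_plus (fun x => Derive e x * gg x) (fun x => e x * Derive gg x)); apply ex_derive_mult; auto.
  2: apply (ex_derive_scal (fun x => f x * Derive f x)); apply ex_derive_mult; auto.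
  rewrite (Derive_plus (fun x => Derive e x * gg x) (fun x => e x * Derive gg x)) by (apply ex_derive_mult; auto).
  rewrite (Derive_scal (fun x => f x * Derive f x)).
  rewrite !Derive_mult by auto. ring.
Qed.

Lemma psd_alg E F G : (forall a b, 0 <= E*a*a + F*(a*b+b*a) + G*b*b) ->
  0 <= E /\ 0 <= G /\ 0 <= E*G - F^2.
Proof.
  intros H. pose proof (H 1 0) as H1. pose proof (H 0 1) as H2.
  assert (hE : 0 <= E) by nra. assert (hG : 0 <= G) by nra.
  split; auto. split; auto.
  pose proof (H F (-E)) as H3. pose proof (H (-(G+1)) F) as H4.
  destruct (Rlt_le_dec 0 E) as [Ep|Ez].
  - assert (0 <= E * (E*G - F^2)) by nra.
    apply Rmult_le_reg_l with E; auto. lra.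
  - assert (E = 0) by lra. subst E.
    assert (0 <= - F^2 * (G+2)) by nra.
    assert (0 <= F^2) by nra. assert (F^2 * (G + 2) <= 0) by lra.
    assert (F^2 = 0) by nra. nra.
Qed.

Lemma pd_alg E F G : 0 <= E -> 0 < E*G - F^2 ->
  forall a b, (a, b) <> (0, 0) -> 0 < E*a*a + F*(a*b+b*a) + G*b*b.
Proof.
  intros hE hd a b hab.
  assert (Ep : 0 < E) by (destruct (Req_dec E 0); [subst; nra|lra]).
  assert (key : E * (E*a*a + F*(a*b+b*a) + G*b*b) = (E*a+F*b)^2 + (E*G-F^2)*b^2) by ring.
  destruct (Req_dec b 0) as [hb|hb].
  - subst b. assert (a <> 0) by (intro; subst; apply hab; reflexivity).
    assert (0 < a * a) by (pose proof (Rsqr_pos_lt a H); unfold Rsqr in *; lra). nra.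
  - assert (0 < b^2) by (pose proof (Rsqr_pos_lt b hb); unfold Rsqr in *; simpl; lra).
    assert (0 < E * (E*a*a + F*(a*b+b*a) + G*b*b)).
    { rewrite key. pose proof (pow2_ge_0 (E*a+F*b)).
      assert (0 < (E*G-F^2)*b^2) by (apply Rmult_lt_0_compat; auto). lra. }
    apply Rmult_lt_reg_l with E; auto. lra.
Qed.

Lemma hess_pd A B C : (forall u v, 0 <= A*u^2 + 2*B*u*v + C*v^2) -> A*C - B^2 <> 0 ->
  0 < A /\ 0 < C /\ 0 < A*C - B^2.
Proof.
  intros H hd. pose proof (H 1 0) as H1. pose proof (H 0 1) as H2.
  assert (hA : 0 <= A) by nra. assert (hC : 0 <= C) by nra.
  assert (hdet : 0 < A*C - B^2).
  { destruct (Rlt_le_dec 0 (A*C-B^2)) as [|hle]; auto. exfalso.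
    assert (hlt : A*C - B^2 < 0) by lra.
    destruct (Rlt_le_dec 0 A) as [Ap|Az].
    - pose proof (H B (-A)) as H3. assert (A * (A*C-B^2) < 0) by nra. nra.
    - assert (A = 0) by lra. subst A.
      assert (B <> 0) by (intro; subst; nra).
      pose proof (H (-(C+1)/(2*B)) 1) as H3.
      replace (0 * (- (C + 1) / (2 * B)) ^ 2 + 2 * B * (- (C + 1) / (2 * B)) * 1 + C * 1 ^ 2)
        with (-1) in H3 by (field; auto). lra. }
  split; [|split]; auto.
  - destruct (Req_dec A 0); [subst; nra|lra].
  - destruct (Req_dec C 0); [subst; nra|lra].
Qed.

Lemma quad_pos A B C D x y d : 0 < A -> 0 < C -> 0 < A*C - B^2 -> (x, y) <> (0, 0) ->
  Rmax (Rabs x) (Rabs y) * (2*(A+C)*(Rabs D+1)) < A*C - B^2 ->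
  Rabs (d - (0*x + 0*y + (A*x^2 + 2*B*x*y + C*y^2)/2)) <= D * Rmax (Rabs x) (Rabs y) ^ 3 ->
  0 < d.
Proof.
  intros hA hC hdet hxy hm hb.
  set (m := Rmax (Rabs x) (Rabs y)) in *.
  assert (hm0 : 0 < m).
  { unfold m. destruct (Req_dec x 0) as [hx|hx].
    - subst x. assert (y <> 0) by (intro; subst; apply hxy; reflexivity).
      eapply Rlt_le_trans; [apply Rabs_pos_lt; eauto|apply Rmax_r].
    - eapply Rlt_le_trans; [apply Rabs_pos_lt; eauto|apply Rmax_l]. }
  assert (hsq : m^2 <= x^2 + y^2).
  { unfold m. apply Rmax_case_strong; intros _.
    - rewrite <- (pow2_abs x). assert (0 <= y^2) by nra. lra.
    - rewrite <- (pow2_abs y). assert (0 <= x^2) by nra. lra. }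
  set (Q := (A*x^2 + 2*B*x*y + C*y^2)/2).
  assert (hQ : (A*C - B^2) * (x^2+y^2) <= 2*(A+C)*Q).
  { assert (e : 2*(A+C)*Q - (A*C - B^2) * (x^2+y^2) = (A*x+B*y)^2 + (B*x+C*y)^2) by (unfold Q; field).
    pose proof (pow2_ge_0 (A*x+B*y)). pose proof (pow2_ge_0 (B*x+C*y)). lra. }
  assert (hD : D * m^3 <= Rabs D * m^3) by (apply Rmult_le_compat_r; [apply pow_le; lra|apply Rle_abs]).
  assert (h1 : Rabs D * m * (2*(A+C)) < A*C - B^2).
  { assert (Rabs D * m * (2*(A+C)) <= m * (2*(A+C)*(Rabs D+1))).
    { pose proof (Rabs_pos D). nra. }
    lra. }
  assert (h2 : 2*(A+C) * (Rabs D * m^3) < 2*(A+C) * Q).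
  { assert (Rabs D * m * (2*(A+C)) * m^2 < (A*C - B^2) * m^2) by (apply Rmult_lt_compat_r; [nra|auto]).
    assert ((A*C - B^2) * m^2 <= (A*C-B^2)*(x^2+y^2)) by (apply Rmult_le_compat_l; lra).
    replace (2*(A+C) * (Rabs D * m^3)) with (Rabs D * m * (2*(A+C)) * m^2) by ring. lra. }
  assert (h3 : Rabs D * m^3 < Q) by (apply Rmult_lt_reg_l with (2*(A+C)); lra).
  fold Q in hb. replace (0*x+0*y+Q) with Q in hb by ring.
  pose proof (Rle_abs (Q - d)). rewrite <- Rabs_Ropp in hb.
  replace (- (d - Q)) with (Q - d) in hb by ring. lra.
Qed.

Lemma min_taylor U f : open2 U -> U 0 0 -> (forall n, Ck n U f) ->
  (forall u v, U u v -> 0 <= f u v) -> f 0 0 = 0 ->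
  exists D r, 0 < r /\ (forall x y, Rabs x < r -> Rabs y < r -> U x y /\
     Rabs (f x y - (du f 0 0 * x + dv f 0 0 * y +
       (du (du f) 0 0 * x^2 + 2 * du (dv f) 0 0 * x * y + dv (dv f) 0 0 * y^2) / 2))
     <= D * Rmax (Rabs x) (Rabs y) ^ 3)
  /\ du f 0 0 = 0 /\ dv f 0 0 = 0 /\
  (forall u0 v0, 0 <= du (du f) 0 0 * u0^2 + 2 * du (dv f) 0 0 * u0 * v0 + dv (dv f) 0 0 * v0^2).
Proof.
  intros HU H0 Hf Hpos Hf0.
  assert (Hloc : locally_2d (fun u v => ex_diff_n f (S 2) u v) 0 0).
  { destruct (open_locally2d U 0 0 HU H0) as [e He]. exists e. intros u v Hu Hv.
    apply Ck_exdiff with U; auto. }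
  destruct (Taylor_Lagrange_2d f 2 0 0 Hloc) as [D [d Hd]].
  destruct (HU 0 0 H0) as [e [ep He]].
  set (r := Rmin d e).
  assert (hr : 0 < r) by (apply Rmin_pos; [apply cond_pos|auto]).
  assert (Hall : forall x y, Rabs x < r -> Rabs y < r -> U x y /\
     Rabs (f x y - (du f 0 0 * x + dv f 0 0 * y +
       (du (du f) 0 0 * x^2 + 2 * du (dv f) 0 0 * x * y + dv (dv f) 0 0 * y^2) / 2))
     <= D * Rmax (Rabs x) (Rabs y) ^ 3).
  { intros x y hx hy.
    assert (hxd : Rabs x < d) by (eapply Rlt_le_trans; [exact hx| apply Rmin_l]).
    assert (hyd : Rabs y < d) by (eapply Rlt_le_trans; [exact hy| apply Rmin_l]).
    assert (hxe : Rabs x < e) by (eapply Rlt_le_trans; [exact hx| apply Rmin_r]).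
    assert (hye : Rabs y < e) by (eapply Rlt_le_trans; [exact hy| apply Rmin_r]).
    split. { apply He; rewrite Rminus_0_r; auto. }
    pose proof (Hd x y ltac:(rewrite Rminus_0_r; auto) ltac:(rewrite Rminus_0_r; auto)) as H.
    rewrite !Rminus_0_r, DL2, Hf0 in H. rewrite Rplus_0_l in H. exact H. }
  destruct (core f (du f 0 0) (dv f 0 0) (du (du f) 0 0) (du (dv f) 0 0) (dv (dv f) 0 0) D r hr)
    as [ha [hb hq]].
  { intros x y hx hy. destruct (Hall x y hx hy) as [hU hB]. split; auto. }
  exists D, r. repeat split; auto; now apply Hall.
Qed.

Lemma sq_lt x r : 0 < r -> x^2 < r^2 -> Rabs x < r.
Proof.
  intros hr h. rewrite <- pow2_abs in h. destruct (Rlt_le_dec (Rabs x) r) as [|hle]; auto.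
  assert (r^2 <= Rabs x ^2) by (apply pow_incr; lra). lra.
Qed.

Lemma null_char g u v a b : nullspace g u v a b <->
  (mE g u v * a + mF g u v * b = 0 /\ mF g u v * a + mG g u v * b = 0).
Proof.
  unfold nullspace, bform. split.
  - intros H. pose proof (H 1 0). pose proof (H 0 1). split; lra.
  - intros [h1 h2] c d. 
    replace (mE g u v * a * c + mF g u v * (a * d + b * c) + mG g u v * b * d)
      with (c * (mE g u v * a + mF g u v * b) + d * (mF g u v * a + mG g u v * b)) by ring.
    rewrite h1, h2. ring.
Qed.

Theorem proposition4p3 (U : R -> R -> Prop) (g : metric) :
  open2 U -> U 0 0 ->
  smooth_metric U g -> psd_metric U g -> admissible U g ->
  intrinsic_cross_cap U g ->
  isolated_singular U g /\ nullspace_dim1 g 0 0.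
Proof.
  intros HU H0 Hsm Hpsd _ [Hsing Hcc].
  assert (Hpsd' : forall u v, U u v -> 0 <= mE g u v /\ 0 <= mG g u v /\ 0 <= delta g u v).
  { intros u v h. apply psd_alg. intros a b. exact (Hpsd u v h a b). }
  assert (Hnons : forall u v, U u v -> 0 < delta g u v -> ~ singular U g u v).
  { intros u v hU hd [_ hs]. apply hs. intros a b hab. apply pd_alg; auto. apply Hpsd'; auto. }
  assert (Hd0 : delta g 0 0 = 0).
  { destruct (Rle_lt_dec (delta g 0 0) 0) as [h|h].
    - pose proof (Hpsd' 0 0 H0). lra.
    - exfalso. exact (Hnons 0 0 H0 h Hsing). }
  destruct (min_taylor U (delta g) HU H0 (fun n => delta_Ck n U g HU Hsm)
     (fun u v h => proj2 (proj2 (Hpsd' u v h))) Hd0) as [D [r [hr [Hall [ha [hb hq]]]]]].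
  destruct (hess_pd _ _ _ hq Hcc) as [hA [hC hdet]].
  split.
  - set (A := du (du (delta g)) 0 0) in *.
    set (B := du (dv (delta g)) 0 0) in *.
    set (C := dv (dv (delta g)) 0 0) in *.
    set (K := 2*(A+C)*(Rabs D+1)).
    assert (hK : 0 < K) by (unfold K; pose proof (Rabs_pos D); apply Rmult_lt_0_compat; lra).
    set (r' := Rmin r ((A*C-B^2) / K)).
    assert (hr' : 0 < r') by (apply Rmin_pos; auto; apply Rdiv_lt_0_compat; auto).
    exists r'. split; auto. intros u v huv hn hs.
    assert (hu : Rabs u < r') by (apply sq_lt; auto; pose proof (pow2_ge_0 v); lra).
    assert (hv : Rabs v < r') by (apply sq_lt; auto; pose proof (pow2_ge_0 u); lra).
    assert (hur : Rabs u < r) by (eapply Rlt_le_trans; [exact hu|apply Rmin_l]).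
    assert (hvr : Rabs v < r) by (eapply Rlt_le_trans; [exact hv|apply Rmin_l]).
    destruct (Hall u v hur hvr) as [hU hB].
    rewrite ha, hb in hB.
    apply (Hnons u v hU); auto.
    apply (quad_pos A B C D u v); auto.
    assert (hm : Rmax (Rabs u) (Rabs v) < (A*C-B^2)/K).
    { apply Rmax_lub_lt; [apply Rlt_le_trans with r'; [exact hu|apply Rmin_r]|apply Rlt_le_trans with r'; [exact hv|apply Rmin_r]]. }
    apply Rmult_lt_compat_r with (r := K) in hm; auto.
    unfold Rdiv in hm. rewrite Rmult_assoc, Rinv_l, Rmult_1_r in hm by lra. exact hm.
  - assert (hδ : mE g 0 0 * mG g 0 0 - mF g 0 0 ^ 2 = 0) by exact Hd0.
    destruct (Req_dec (mE g 0 0) 0) as [hE|hE].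
    + assert (hF : mF g 0 0 = 0).
      { rewrite hE in hδ. assert (mF g 0 0 ^ 2 = 0) by lra.
        apply Rsqr_0_uniq; unfold Rsqr; simpl in H; lra. }
      destruct (Req_dec (mG g 0 0) 0) as [hG|hG].
      * exfalso.
        destruct Hsm as [SE [SF SG]].
        destruct (min_taylor U (mE g) HU H0 SE (fun u v h => proj1 (Hpsd' u v h)) hE)
          as [_ [_ [_ [_ [hEu _]]]]].
        destruct (min_taylor U (mG g) HU H0 SG (fun u v h => proj1 (proj2 (Hpsd' u v h))) hG)
          as [_ [_ [_ [_ [hGu _]]]]].
        assert (HA : du (du (delta g)) 0 0 = -2 * (du (mF g) 0 0)^2).
        { change (du (du (delta g)) 0 0) with
            (Derive (fun x => Derive (fun y => mE g y 0 * mG g y 0 - mF g y 0 ^ 2) x) 0).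
          rewrite (d2_prod (fun y => mE g y 0) (fun y => mG g y 0) (fun y => mF g y 0)).
          - change (Derive (fun y => mE g y 0) 0) with (du (mE g) 0 0).
            change (Derive (fun y => mG g y 0) 0) with (du (mG g) 0 0).
            change (Derive (fun y => mF g y 0) 0) with (du (mF g) 0 0).
            rewrite hEu, hGu, hE, hG, hF. ring.
          - apply filter_imp with (2 := open_locally1 U 0 0 HU H0). intros x hx.
            destruct (proj1 (SE 1%nat) x 0 hx) as [_ [D1 _]].
            destruct (proj1 (SG 1%nat) x 0 hx) as [_ [D2 _]].
            destruct (proj1 (SF 1%nat) x 0 hx) as [_ [D3 _]].
            auto.
          - exact (proj1 (proj2 (proj1 (proj1 (proj2 (SE 2%nat))) 0 0 H0))).
          - exact (proj1 (proj2 (proj1 (proj1 (proj2 (SG 2%nat))) 0 0 H0))).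
          - exact (proj1 (proj2 (proj1 (proj1 (proj2 (SF 2%nat))) 0 0 H0))). }
        rewrite HA in hA. pose proof (pow2_ge_0 (du (mF g) 0 0)). lra.
      * exists 1, 0. split. { intro h. injection h. lra. }
        intros a b. rewrite null_char, hE, hF. split.
        -- intros [_ h2]. exists a. split; [ring|].
           assert (b = 0) by (apply Rmult_eq_reg_l with (mG g 0 0); auto; lra). lra.
        -- intros [t [h1 h2]]. subst. split; ring.
    + exists (- mF g 0 0), (mE g 0 0). split. { intro h. injection h. auto. }
      intros a b. rewrite null_char. split.
      * intros [h1 h2]. exists (b / mE g 0 0). split; [|field; auto].
        apply Rmult_eq_reg_l with (mE g 0 0); auto. field_simplify; auto. lra.
      * intros [t [h1 h2]]. subst. split; [ring|].
        replace (mF g 0 0 * (t * - mF g 0 0) + mG g 0 0 * (t * mE g 0 0))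
          with (t * (mE g 0 0 * mG g 0 0 - mF g 0 0 ^ 2)) by ring.
        rewrite hδ. ring.
Qed.
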